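(* Let $(\mathfrak g,\{e_1,\dots,e_n\})$ be a nice nilpotent Lie algebra with root matrix $M_\Delta\in\mathbb R^{m\times n}$ and structure constants $c_{ij}^k$, and let $b\in\mathbb R^m$ be a solution of $M_\Delta M_\Delta^{T} b=[1]$. Let $g=\sum_{i=1}^n g_i\, e^i\otimes e^i$ ($g_i\neq 0$) be a diagonal pseudo-Riemannian metric on $\mathfrak g$, let $\lambda\in\mathbb R$, and define $X\in\mathbb R^m$ by letting, for the row $h$ of $M_\Delta$ corresponding to $(\{i,j\},k)$ with $i<j$, $$X_h=\frac{g_k}{g_ig_j}\,(c_{ij}^k)^2 .$$ Then the following are equivalent: (1) $g$ is a nilsoliton with $\operatorname{Ric}=\lambda\,\mathrm{id}+D$ for some derivation $D$ of $\mathfrak g$; (2) $\operatorname{Ric}=\lambda(\mathrm{id}-N)$, where $N$ is the diagonal Nikolayevsky derivation; (3) $X\in -2\lambda b+\ker M_\Delta^{T}$.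
   Context: A nice Lie algebra is a Lie algebra $\mathfrak g$ with a basis $\{e_1,\dots,e_n\}$ (dual basis $\{e^1,\dots,e^n\}$) such that each bracket $[e_i,e_j]$ is a multiple of some $e_k$ and each $e_i\lrcorner\, de^j$ is a multiple of some $e^k$, where $d$ is the Chevalley–Eilenberg differential. Write $[e_i,e_j]=c_{ij}^k e_k$ for $i<j$. The root matrix $M_\Delta$ has one row for each triple $(\{i,j\},k)$ such that $[e_i,e_j]$ is a nonzero multiple of $e_k$; that row has $+1$ in position $k$, $-1$ in positions $i$ and $j$, and $0$ elsewhere; $m$ is the number of rows. $[1]$ denotes the vector with all entries $1$, and for $v\in\mathbb R^n$, $v^D$ denotes the diagonal matrix (in the basis $\{e_i\}$) with diagonal entries those of $v$. The diagonal Nikolayevsky derivation is $N=v^D$ with $v=M_\Delta^{T}b+[1]$, where $b$ is any solution of $M_\Delta M_\Delta^T b=[1]$. $\operatorname{Ric}$ denotes the Ricci operator of the left-invariant pseudo-Riemannian metric determined by $g$. A metric is a nilsoliton if $\operatorname{Ric}=\lambda\,\mathrm{id}+D$ with $\lambda\in\mathbb R$ and $D$ a derivation. *)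

(* Defs.v *)
From HB Require Import structures.
From mathcomp Require Import all_boot all_order all_algebra.
From mathcomp Require Import reals.
Set Implicit Arguments. Unset Strict Implicit. Unset Printing Implicit Defensive.
Import Order.TTheory GRing.Theory Num.Theory.
Local Open Scope ring_scope.

(* A Lie algebra g of dimension n with basis e_0..e_(n-1) is given by its
   structure constants: [e_i, e_j] = \sum_k c i j k e_k.
   Endomorphisms are represented by matrices A with
   A k l = coefficient of e_k in A(e_l)  (column convention). *)

Section Defs.
Variables (R : realType) (n : nat) (c : 'I_n -> 'I_n -> 'I_n -> R).

Definition lie_algebra : Prop :=
  (forall i j k, c i j k = - c j i k) /\
  (forall i j l q,
     \sum_p (c j l p * c i p q + c l i p * c j p q + c i j p * c l p q) = 0).

Definition ad (i : 'I_n) : 'M[R]_n := \matrix_(k, l) c i l k.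

Definition nilpotent_lie : Prop :=
  exists p : nat, forall s : seq 'I_n, size s = p ->
    foldr (fun i A => ad i *m A) 1%:M s = 0.

(* (e_i ⌟ d e^j)(e_l) = d e^j (e_i, e_l) = - e^j([e_i, e_l]) *)
Definition contr_de (i j l : 'I_n) : R := - c i l j.

Definition nice_basis : Prop :=
  (forall i j, exists k, forall k', k' != k -> c i j k' = 0) /\
  (forall i j, exists k, forall l, l != k -> contr_de i j l = 0).

Definition nice_nilpotent : Prop :=
  [/\ lie_algebra, nilpotent_lie & nice_basis].

Definition derivation (D : 'M[R]_n) : Prop :=
  forall i j l,
    \sum_k c i j k * D l k = \sum_p D p i * c p j l + \sum_p D p j * c i p l.

(* Rows of the root matrix: triples ((i, j), k) with i < j and c i j k != 0,
   enumerated in the (fixed) enumeration order of the finite set. *)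
Definition rootset : {set ('I_n * 'I_n) * 'I_n} :=
  [set t : ('I_n * 'I_n) * 'I_n | (t.1.1 < t.1.2)%N && (c t.1.1 t.1.2 t.2 != 0)].

Definition nroots : nat := #|rootset|.

Definition root_of (h : 'I_nroots) : ('I_n * 'I_n) * 'I_n := enum_val h.

Definition root_matrix : 'M[R]_(nroots, n) :=
  \matrix_(h, l) let t := root_of h in
    ((l == t.2)%:R - (l == t.1.1)%:R - (l == t.1.2)%:R).

Definition nikolayevsky (b : 'cV[R]_nroots) : 'M[R]_n :=
  diag_mx (((root_matrix)^T *m b + const_mx 1)^T).

Definition Xvec (g : 'I_n -> R) : 'cV[R]_nroots :=
  \col_h let t := root_of h in
    g t.2 / (g t.1.1 * g t.1.2) * (c t.1.1 t.1.2 t.2) ^+ 2.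

(* Left-invariant pseudo-Riemannian metric given by the Gram matrix G,
   G a b = g(e_a, e_b). Levi-Civita connection via the Koszul formula:
   2 g(nabla_x y, z) = g([x,y],z) - g([y,z],x) + g([z,x],y). *)
Variable G : 'M[R]_n.

Definition koszul (a b d : 'I_n) : R :=
  \sum_p c a b p * G p d - \sum_p c b d p * G p a + \sum_p c d a p * G p b.

(* nabla_{e_a} e_b = \sum_e Gam a b e e_e *)
Definition Gam (a b e : 'I_n) : R :=
  2^-1 * \sum_d invmx G e d * koszul a b d.

(* R(e_a,e_b) e_f = nabla_a nabla_b e_f - nabla_b nabla_a e_f - nabla_[e_a,e_b] e_f
   = \sum_q Riem a b f q e_q *)
Definition Riem (a b f q : 'I_n) : R :=
  \sum_e (Gam b f e * Gam a e q - Gam a f e * Gam b e q)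
  - \sum_p c a b p * Gam p f q.

(* Ricci tensor ric(y, z) = tr (x |-> R(x, y) z) *)
Definition ric (b f : 'I_n) : R := \sum_a Riem a b f a.

(* Ricci operator: g(Ric y, z) = ric(y, z) *)
Definition ricci : 'M[R]_n := ((\matrix_(b, f) ric b f) *m invmx G)^T.

End Defs.

Arguments root_of {R n} c h.
Arguments nikolayevsky {R n} c b.
Arguments Xvec {R n} c g.

(* Main.v *)
Require Import Defs.
From HB Require Import structures.
From mathcomp Require Import all_boot all_order all_algebra.
From mathcomp Require Import reals.
From mathcomp Require Import ring lra zify.
Set Implicit Arguments. Unset Strict Implicit. Unset Printing Implicit Defensive.
Import Order.TTheory GRing.Theory Num.Theory.
Local Open Scope ring_scope.

Section Nil.
Variables (R : realType) (n : nat) (c : 'I_n -> 'I_n -> 'I_n -> R).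

Definition P (s : seq 'I_n) : 'M[R]_n := foldr (fun i A => ad c i *m A) 1%:M s.

Lemma P_cat s t : P (s ++ t) = P s *m P t.
Proof. by elim: s => [|x s IH] /=; rewrite ?mul1mx // /P /= -/(P _) -/(P _) IH mulmxA. Qed.

Lemma nil_big : nilpotent_lie c -> exists p, forall s, (p <= size s)%N -> P s = 0.
Proof.
case=> p Hp; exists p => s Hs.
rewrite -(cat_take_drop p s) P_cat.
have -> : P (take p s) = 0.
  apply: Hp; rewrite size_take.
  by case: ltnP Hs => // H1 H2; apply/eqP; rewrite eqn_leq H1 H2.
by rewrite mul0mx.
Qed.

Lemma P_pow w (u : 'cV[R]_n) mu k : P w *m u = mu *: u ->
  P (flatten (nseq k w)) *m u = mu ^+ k *: u.
Proof.
move=> H; elim: k => [|k IH]; first by rewrite /= mul1mx expr0 scale1r.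
rewrite /= P_cat -mulmxA IH -scalemxAr H scalerA exprS mulrC.
done.
Qed.

Lemma size_flat_nseq (w : seq 'I_n) k : size (flatten (nseq k w)) = (k * size w)%N.
Proof. by elim: k => //= k IH; rewrite size_cat IH mulSn. Qed.

Lemma eig_zero w (u : 'cV[R]_n) mu : nilpotent_lie c -> w != [::] -> u != 0 ->
  P w *m u = mu *: u -> mu = 0.
Proof.
move=> /nil_big [p Hp] wn un H.
have := P_pow p H; rewrite Hp; last first.
  by rewrite size_flat_nseq; case: w wn {H} => //= x w _; rewrite mulnS; lia.
rewrite mul0mx => /esym /eqP; rewrite scaler_eq0 (negPf un) orbF expf_eq0.
by case/andP => _ /eqP.
Qed.

Lemma ad_delta i a k0 : (forall k', k' != k0 -> c i a k' = 0) ->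
  ad c i *m delta_mx a (0 : 'I_1) = c i a k0 *: delta_mx k0 (0 : 'I_1).
Proof.
move=> H; apply/matrixP => x y; rewrite !mxE (bigD1 a) //= big1 ?addr0; last first.
  by move=> j /negPf hj; rewrite !mxE hj mulr0.
rewrite !mxE eqxx ord1 eqxx !mulr1.
by case: (eqVneq x k0) => [->|/H ->]; rewrite ?mulr1 ?mulr0.
Qed.

Lemma delta_neq0 a : delta_mx a (0 : 'I_1) != 0 :> 'cV[R]_n.
Proof. by apply/negP => /eqP /matrixP /(_ a 0); rewrite !mxE !eqxx /= => /eqP; rewrite oner_eq0. Qed.

Hypothesis Hnice : nice_nilpotent c.

Lemma anti i j k : c i j k = - c j i k.
Proof. by case: Hnice => [[H _] _ _]. Qed.

Lemma nice1 i j : exists k, forall k', k' != k -> c i j k' = 0.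
Proof. by case: Hnice => _ _ [H _]. Qed.

Lemma nice2 i j : exists k, forall l, l != k -> c i l j = 0.
Proof.
case: Hnice => _ _ [_ H]; case: (H i j) => k Hk; exists k => l /Hk.
by rewrite /contr_de => /eqP; rewrite oppr_eq0 => /eqP.
Qed.

Lemma c_diag i k : c i i k = 0.
Proof. by have := anti i i k; move/eqP; rewrite -addr_eq0 -mulr2n mulrn_eq0 /= => /eqP. Qed.

Lemma trace0 a e : c e a a = 0.
Proof.
case: (nice1 e a) => k Hk.
case: (eqVneq a k) => [ak|/Hk //]; subst k.
have nl : nilpotent_lie c by case: Hnice.
apply: (eig_zero (w := [:: e]) nl _ (delta_neq0 a)) => //.
by rewrite /P /= mulmx1 (ad_delta Hk).
Qed.

Lemma killing0 a b e f : c a b e * c e f a = 0.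
Proof.
have nl : nilpotent_lie c by case: Hnice.
case: (eqVneq (c a b e) 0) => [->|h1]; first by rewrite mul0r.
case: (eqVneq (c e f a) 0) => [->|h2]; first by rewrite mulr0.
case: (nice1 b a) => k Hk.
have ek : e = k.
  apply/eqP; apply/negP => /negP /Hk; rewrite anti => /eqP; rewrite oppr_eq0.
  by rewrite (negPf h1).
subst k.
case: (nice1 f e) => k Hk2.
have ak : a = k.
  apply/eqP; apply/negP => /negP /Hk2; rewrite anti => /eqP; rewrite oppr_eq0.
  by rewrite (negPf h2).
subst k.
have := (eig_zero (w := [:: f; b]) (mu := c f e a * c b a e) nl _ (delta_neq0 a)).
rewrite /P /= mulmx1 -mulmxA (ad_delta Hk) -scalemxAr (ad_delta Hk2) scalerA mulrC.
move=> /(_ isT erefl) /eqP; rewrite mulf_eq0 => /orP [] /eqP.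
  by rewrite anti => /eqP; rewrite oppr_eq0 (negPf h2).
by rewrite anti => /eqP; rewrite oppr_eq0 (negPf h1).
Qed.

Lemma offdiag1 e a b f : b != f -> c e a f * c e a b = 0.
Proof.
move=> bf; case: (nice1 e a) => k Hk.
case: (eqVneq f k) => [fk|/Hk ->]; last by rewrite mul0r.
case: (eqVneq b k) => [bk|/Hk ->]; last by rewrite mulr0.
by move: bf; rewrite bk fk eqxx.
Qed.

Lemma offdiag2 a b e f : b != f -> c a b e * c f a e = 0.
Proof.
move=> bf; case: (nice2 a e) => k Hk; rewrite (anti f a e).
case: (eqVneq f k) => [fk|/Hk ->]; last by rewrite oppr0 mulr0.
case: (eqVneq b k) => [bk|/Hk ->]; last by rewrite mul0r.
by move: bf; rewrite bk fk eqxx.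
Qed.

Lemma sum_sym (K K' : 'I_n -> 'I_n -> R) :
  (forall a e, K a e + K e a = K' a e + K' e a) ->
  \sum_a \sum_e K a e = \sum_a \sum_e K' a e.
Proof.
move=> H.
have E (L : 'I_n -> 'I_n -> R) : \sum_a \sum_e L a e =
    2^-1 * \sum_a \sum_e (L a e + L e a).
  rewrite [X in _ = _ * X](eq_bigr (fun a => \sum_e L a e + \sum_e L e a));
    last by move=> a _; rewrite big_split.
  rewrite big_split /= [X in _ = _ * (_ + X)]exchange_big /=.
  set X := \sum_a \sum_e L a e.
  have h2 : (2:R) != 0 by rewrite pnatr_eq0.
  by field.
by rewrite E (E K'); congr (_ * _); apply: eq_bigr => a _; apply: eq_bigr.
Qed.

Lemma sum_delta (k : 'I_n) (F : 'I_n -> R) : \sum_l (k == l)%:R * F l = F k.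
Proof.
rewrite (bigD1 k) //= eqxx mul1r big1 ?addr0 // => l.
by rewrite eq_sym => /negPf ->; rewrite mul0r.
Qed.

End Nil.

Section Ric.
Variables (R : realType) (n : nat) (c : 'I_n -> 'I_n -> 'I_n -> R) (g : 'I_n -> R).
Hypothesis Hnice : nice_nilpotent c.
Hypothesis gnz : forall i, g i != 0.
Let G := diag_mx (\row_i g i).

Lemma invG : invmx G = diag_mx (\row_i (g i)^-1).
Proof.
have H : G *m diag_mx (\row_i (g i)^-1) = 1%:M.
  rewrite /G mulmx_diag -diag_const_mx; congr diag_mx; apply/rowP => i.
  by rewrite !mxE mulfV.
have [U _] := mulmx1_unit H.
by rewrite -[RHS]mul1mx -(mulVmx U) -mulmxA H mulmx1.
Qed.

Lemma sum_diagr (x : 'I_n -> R) (d : 'rV[R]_n) j :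
  \sum_p x p * diag_mx d p j = x j * d 0 j.
Proof.
rewrite (bigD1 j) //= mxE eqxx mulr1n big1 ?addr0 // => p /negPf hp.
by rewrite mxE hp mulr0n mulr0.
Qed.

Lemma sum_diagl (x : 'I_n -> R) (d : 'rV[R]_n) j :
  \sum_p diag_mx d j p * x p = d 0 j * x j.
Proof.
rewrite (bigD1 j) //= mxE eqxx mulr1n big1 ?addr0 // => p.
rewrite eq_sym => /negPf hp.
by rewrite mxE hp mulr0n mul0r.
Qed.

Definition Gm a b e := 2^-1 * (g e)^-1 * (c a b e * g e - c b e a * g a + c e a b * g b).

Lemma GamE a b e : Gam c G a b e = Gm a b e.
Proof.
rewrite /Gam /Gm invG sum_diagl mxE mulrA; congr (_ * _).
by rewrite /koszul /G !sum_diagr !mxE.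
Qed.

Definition Fr b f a e := Gm b f e * Gm a e a - Gm a f e * Gm b e a - c a b e * Gm e f a.
Definition Hr b f a e := 4^-1 * (g f * g b) / (g e * g a) * (c e a f * c e a b)
   + 2^-1 * (g e / g a) * (c a b e * c f a e).

Lemma ricE b f : ric c G b f = \sum_a \sum_e Fr b f a e.
Proof.
rewrite /ric; apply: eq_bigr => a _.
rewrite /Riem /Fr [RHS]sumrB; congr (_ - _).
  by apply: eq_bigr => e _; rewrite !GamE.
by apply: eq_bigr => e _; rewrite !GamE.
Qed.

Lemma FH b f a e : Fr b f a e + Fr b f e a = Hr b f a e + Hr b f e a.
Proof.
have Z1 : Gm a e a = 0.
  by rewrite /Gm (anti Hnice a e a) !trace0 // c_diag // !(oppr0, mul0r, subr0, addr0, mulr0).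
have Z2 : Gm e a e = 0.
  by rewrite /Gm (anti Hnice e a e) !trace0 // c_diag // !(oppr0, mul0r, subr0, addr0, mulr0).
rewrite /Fr Z1 Z2 !mulr0 !sub0r /Hr /Gm.
rewrite (anti Hnice f a e) (anti Hnice e f a) (anti Hnice a e f) (anti Hnice e b a)
  (anti Hnice a e b) (anti Hnice b a e).
have K1 : c a b e * c f e a = 0.
  by apply/eqP; rewrite -oppr_eq0 -mulrN -(anti Hnice) killing0.
have K2 : c b e a * c a f e = 0.
  by apply/eqP; rewrite -oppr_eq0 -mulNr -(anti Hnice) killing0.
have g2 : (2:R) != 0 by rewrite pnatr_eq0.
have g4 : (4:R) != 0 by rewrite pnatr_eq0.
have ga := gnz a; have ge := gnz e; have gb := gnz b; have gf := gnz f.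
move: K1 K2 => /eqP; rewrite mulf_eq0 => /orP [] /eqP -> /eqP;
  rewrite mulf_eq0 => /orP [] /eqP ->; field; by rewrite ge ga.
Qed.


Lemma ricH b f : ric c G b f = \sum_a \sum_e Hr b f a e.
Proof. by rewrite ricE; apply: sum_sym; apply: FH. Qed.

Lemma ric_off l k : l != k -> ric c G l k = 0.
Proof.
move=> lk; rewrite ricH big1 // => a _; rewrite big1 // => e _.
by rewrite /Hr (offdiag1 Hnice) // (offdiag2 Hnice) // !mulr0 addr0.
Qed.

Definition Y i j l := g l / (g i * g j) * c i j l ^+ 2.

Lemma Ysym i j l : Y j i l = Y i j l.
Proof. by rewrite /Y (anti Hnice j i l) sqrrN (mulrC (g j)). Qed.

Lemma Ydiag i l : Y i i l = 0.
Proof. by rewrite /Y c_diag // expr0n /= mulr0. Qed.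

Lemma ric_diag k : ric c G k k / g k =
  \sum_a \sum_e (4^-1 * Y a e k - 2^-1 * Y a k e).
Proof.
rewrite ricH mulr_suml; apply: eq_bigr => a _; rewrite mulr_suml.
apply: eq_bigr => e _.
rewrite /Hr /Y (anti Hnice e a k) (anti Hnice k a e).
have g2 : (2:R) != 0 by rewrite pnatr_eq0.
have g4 : (4:R) != 0 by rewrite pnatr_eq0.
have ga := gnz a; have ge := gnz e; have gk := gnz k.
field; by rewrite ?ge ?ga ?gk.
Qed.

Definition ricmat := \matrix_(b, f) ric c G b f.

Lemma ricciE i j : ricci c G i j = ric c G j i / g i.
Proof. by rewrite /ricci mxE invG mul_mx_diag !mxE. Qed.

End Ric.

Section Roots.
Variables (R : realType) (n : nat) (c : 'I_n -> 'I_n -> 'I_n -> R) (g : 'I_n -> R).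
Hypothesis Hnice : nice_nilpotent c.
Hypothesis gnz : forall i, g i != 0.

Lemma sum3 (F : ('I_n * 'I_n) * 'I_n -> R) :
  \sum_t F t = \sum_i \sum_j \sum_l F ((i, j), l).
Proof.
transitivity (\sum_(p : 'I_n * 'I_n) \sum_l F (p, l)).
  by rewrite pair_bigA; apply: eq_bigr => -[p l].
by rewrite [RHS]pair_bigA; apply: eq_bigr => -[i j].
Qed.

Lemma MtX k : ((root_matrix c)^T *m Xvec c g) k 0 =
  \sum_(i : 'I_n) \sum_(j : 'I_n) (i < j)%N%:R *
     (Y c g i j k - ((k == i)%:R + (k == j)%:R) * \sum_l Y c g i j l).
Proof.
rewrite mxE.
pose Phi (t : ('I_n * 'I_n) * 'I_n) :=
  ((k == t.2)%:R - (k == t.1.1)%:R - (k == t.1.2)%:R) * Y c g t.1.1 t.1.2 t.2.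
transitivity (\sum_(h < nroots c) Phi (root_of c h)).
  by apply: eq_bigr => h _; rewrite !mxE.
rewrite /root_of /nroots -(big_enum_val Phi) big_mkcond /= sum3.
apply: eq_bigr => i _; apply: eq_bigr => j _.
transitivity (\sum_l (i < j)%N%:R * Phi ((i, j), l)).
  apply: eq_bigr => l _; rewrite /rootset inE /=.
  case: (i < j)%N; rewrite ?mul1r ?mul0r //=.
  case: eqP => [h|_] //=.
  by rewrite /Phi /Y /= h expr0n /= !mulr0.
rewrite -mulr_sumr; congr (_ * _).
rewrite /Phi /=.
transitivity (\sum_l ((k == l)%:R * Y c g i j l) -
   ((k == i)%:R + (k == j)%:R) * \sum_l Y c g i j l).
  rewrite mulr_sumr -sumrB; apply: eq_bigr => l _; ring.
by rewrite sum_delta.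
Qed.

End Roots.

Section Diag.
Variables (R : realType) (n : nat) (c : 'I_n -> 'I_n -> 'I_n -> R) (g : 'I_n -> R).
Hypothesis Hnice : nice_nilpotent c.
Hypothesis gnz : forall i, g i != 0.
Let G := diag_mx (\row_i g i).

Lemma sum_delta2 (k : 'I_n) (F : 'I_n -> R) : \sum_l (l == k)%:R * F l = F k.
Proof. by rewrite -(sum_delta k F); apply: eq_bigr => l _; rewrite eq_sym. Qed.

Lemma diag_val k : ric c G k k / g k = 2^-1 * ((root_matrix c)^T *m Xvec c g) k 0.
Proof.
rewrite (ric_diag Hnice gnz) (MtX c g) mulr_sumr.
set S := fun i j => \sum_l Y c g i j l.
transitivity (\sum_i \sum_j (4^-1 * Y c g i j k - 2^-1 * ((j == k)%:R * S i j))).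
  apply: eq_bigr => i _; rewrite sumrB [RHS]sumrB; congr (_ - _).
  by rewrite -!mulr_sumr sum_delta2.
transitivity (\sum_(i : 'I_n) \sum_(j : 'I_n) (2^-1 * ((i < j)%N%:R *
     (Y c g i j k - ((k == i)%:R + (k == j)%:R) * S i j)))); last first.
  by apply: eq_bigr => i _; rewrite mulr_sumr.
apply: sum_sym => i j.
have Sij : S j i = S i j by apply: eq_bigr => l _; rewrite (Ysym g Hnice).
rewrite Sij (Ysym g Hnice j i k) !(eq_sym k).
case: (ltngtP i j) => [lt|gt|ij0].
- by rewrite /=; field.
- by rewrite /=; field.
- have ij : i = j := val_inj ij0.
  subst j; rewrite /= /S big1 ?(Ydiag g Hnice) //=; first by field.
  by move=> l _; rewrite (Ydiag g Hnice).
Qed.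

End Diag.

Section Main.
Variables (R : realType) (n : nat) (c : 'I_n -> 'I_n -> 'I_n -> R).
Hypothesis Hnice : nice_nilpotent c.
Local Notation M := (root_matrix c).

Lemma Mrow (w : 'cV[R]_n) h :
  (M *m w) h 0 = w (root_of c h).2 0 - w (root_of c h).1.1 0 - w (root_of c h).1.2 0.
Proof.
rewrite mxE.
transitivity (\sum_l ((l == (root_of c h).2)%:R * w l 0) -
  \sum_l ((l == (root_of c h).1.1)%:R * w l 0) - \sum_l ((l == (root_of c h).1.2)%:R * w l 0)).
  rewrite -!sumrB; apply: eq_bigr => l _; rewrite /root_matrix !mxE /=; ring.
by rewrite !(sum_delta2 _ (fun l => w l 0)).
Qed.

Lemma M1 : M *m const_mx 1 = - const_mx 1 :> 'cV[R]_(nroots c).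
Proof. apply/matrixP => h j; rewrite ord1 Mrow !mxE; ring. Qed.

Lemma deriv_diag_iff (w : 'cV[R]_n) :
  derivation c (diag_mx w^T) <-> forall i j l, c i j l * w l 0 = (w i 0 + w j 0) * c i j l.
Proof.
have E : forall i j l, (\sum_k c i j k * diag_mx w^T l k = c i j l * w l 0) /\
   (\sum_p diag_mx w^T p i * c p j l + \sum_p diag_mx w^T p j * c i p l =
     (w i 0 + w j 0) * c i j l).
  move=> i j l; split.
    rewrite (bigD1 l) //= mxE eqxx mulr1n big1 ?addr0 ?mxE // => k.
    by rewrite eq_sym => /negPf hk; rewrite mxE hk mulr0n mulr0.
  rewrite mulrDl; congr (_ + _).
    rewrite (bigD1 i) //= mxE eqxx mulr1n big1 ?addr0 ?mxE // => k /negPf hk.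
    by rewrite mxE hk mulr0n mul0r.
  rewrite (bigD1 j) //= mxE eqxx mulr1n big1 ?addr0 ?mxE // => k /negPf hk.
  by rewrite mxE hk mulr0n mul0r.
split.
  by move=> H i j l; have [E1 E2] := E i j l; rewrite -E1 -E2; apply: H.
by move=> H i j l; have [E1 E2] := E i j l; rewrite E1 E2; apply: H.
Qed.

Lemma deriv_M (w : 'cV[R]_n) : derivation c (diag_mx w^T) <-> M *m w = 0.
Proof.
rewrite deriv_diag_iff; split.
  move=> H; apply/matrixP => h j; rewrite ord1 Mrow mxE.
  have := enum_valP h; rewrite inE => /andP [_ cn].
  have := H (root_of c h).1.1 (root_of c h).1.2 (root_of c h).2.
  rewrite mulrC => /mulIf => /(_ cn) ->; ring.
move=> H i j l.
case: (eqVneq (c i j l) 0) => [->|cn]; first by rewrite !(mul0r, mulr0).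
have key : forall i j : 'I_n, (i < j)%N -> c i j l != 0 -> w l 0 = w i 0 + w j 0.
  move=> i' j' ij cn'.
  have Ht : ((i', j'), l) \in rootset c by rewrite inE /= ij cn'.
  have := congr1 (fun A : 'M[R]_(nroots c, 1) => A (enum_rank_in Ht ((i', j'), l)) 0) H.
  rewrite Mrow /root_of (enum_rankK_in Ht Ht) /= mxE => /eqP.
  by rewrite subr_eq0 subr_eq => /eqP ->; rewrite addrC.
case: (ltngtP i j) => [ij|ji|ij0].
- by rewrite (key i j) // mulrC.
- rewrite (key j i) // ?(anti Hnice j i l) ?oppr_eq0 // addrC mulrC //.
- by move: cn; rewrite (val_inj ij0) c_diag // eqxx.
Qed.

Lemma kerMMt (z : 'cV[R]_(nroots c)) : M *m M^T *m z = 0 -> M^T *m z = 0.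
Proof.
move=> H; set u := M^T *m z.
have : (u^T *m u) 0 0 = 0.
  by rewrite /u trmx_mul trmxK -mulmxA (mulmxA M) H mulmx0 mxE.
rewrite mxE => H2; apply/matrixP => i j; rewrite ord1 [RHS]mxE.
have P0 : forall k, true -> 0 <= u^T 0 k * u k 0.
  by move=> k _; rewrite mxE -expr2 sqr_ge0.
have Hi : u^T 0 i * u i 0 = 0.
  apply: (psumr_eq0P P0) => //; exact: H2.
by move: Hi; rewrite mxE -expr2 => /eqP; rewrite sqrf_eq0 => /eqP.
Qed.

End Main.

Lemma ricci_diag (R : realType) (n : nat) (c : 'I_n -> 'I_n -> 'I_n -> R) (g : 'I_n -> R) :
  nice_nilpotent c -> (forall i, g i != 0) ->
  ricci c (diag_mx (\row_i g i)) =
  diag_mx ((2^-1 *: ((root_matrix c)^T *m Xvec c g))^T).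
Proof.
move=> Hn gnz; apply/matrixP => i j; rewrite (ricciE c gnz).
case: (eqVneq i j) => [ij|ij].
  by subst j; rewrite (diag_val Hn gnz) !mxE eqxx mulr1n.
by rewrite (ric_off Hn) 1?eq_sym // mul0r !mxE (negPf ij) mulr0n.
Qed.

Lemma diag_inj (R : realType) n (u w : 'cV[R]_n) : diag_mx u^T = diag_mx w^T -> u = w.
Proof.
move=> /matrixP H; apply/matrixP => i j; rewrite ord1.
by have := H i i; rewrite !mxE eqxx !mulr1n.
Qed.

Theorem theorem1p5 (R : realType) (n : nat) (c : 'I_n -> 'I_n -> 'I_n -> R)
    (g : 'I_n -> R) (lam : R) (b : 'cV[R]_(nroots c)) :
  nice_nilpotent c ->
  (forall i, g i != 0) ->
  root_matrix c *m (root_matrix c)^T *m b = const_mx 1 ->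
  let G := diag_mx (\row_i g i) in
  [<-> (exists D : 'M[R]_n, derivation c D /\ ricci c G = lam%:M + D);
       ricci c G = lam *: (1%:M - nikolayevsky c b);
       exists y : 'cV[R]_(nroots c),
         (root_matrix c)^T *m y = 0 /\ Xvec c g = - (2 * lam) *: b + y].
Proof.
move=> Hn gnz Hb G.
set M := root_matrix c; set X := Xvec c g.
have RicE : ricci c G = diag_mx ((2^-1 *: (M^T *m X))^T) by apply: ricci_diag.
set cond := M^T *m X = - (2 * lam) *: (M^T *m b).
have N2 : lam *: (1%:M - nikolayevsky c b) = diag_mx ((- lam *: (M^T *m b))^T).
  apply/matrixP => i j; rewrite /nikolayevsky !mxE.
  case: (eqVneq i j) => [ij|ij]; rewrite /= ?mulr1n ?mulr0n -?/M.
    ring.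
  by rewrite subr0 mulr0.
have c2 : cond -> ricci c G = lam *: (1%:M - nikolayevsky c b).
  move=> C; rewrite RicE N2 C; congr diag_mx; congr trmx.
  rewrite scalerA; congr (_ *: _).
  have h2 : (2:R) != 0 by rewrite pnatr_eq0.
  by field.
have c3 : cond -> exists y : 'cV[R]_(nroots c), M^T *m y = 0 /\ X = - (2 * lam) *: b + y.
  move=> C; exists (X + (2 * lam) *: b); split.
    by rewrite mulmxDr C -scalemxAr scaleNr addNr.
  by rewrite addrCA scaleNr addNr addr0.
have c1 : (exists D, derivation c D /\ ricci c G = lam%:M + D) -> cond.
  case=> D [HD HR].
  pose w : 'cV[R]_n := 2^-1 *: (M^T *m X) - lam *: const_mx 1.
  have DE : D = diag_mx w^T.
    apply/matrixP => i j; move/matrixP: HR => /(_ i j); rewrite RicE !mxE.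
    case: (eqVneq i j) => [ij|ij]; rewrite /= ?mulr1n ?mulr0n => ->; ring.
  move: HD; rewrite DE => /deriv_M - /(_ Hn) Mw.
  have E1 : 2^-1 *: (M *m (M^T *m X)) = - (lam *: const_mx 1).
    by move: Mw; rewrite /w mulmxBr -!scalemxAr M1 scalerN opprK => /eqP;
      rewrite addr_eq0 => /eqP.
  have : M *m M^T *m (X + (2 * lam) *: b) = 0.
    rewrite mulmxDr -scalemxAr Hb -mulmxA.
    have -> : M *m (M^T *m X) = 2 *: (2^-1 *: (M *m (M^T *m X))).
      by rewrite scalerA mulfV ?scale1r // pnatr_eq0.
    by rewrite E1 scalerN scalerA addNr.
  by move/kerMMt => H; apply/eqP; rewrite -subr_eq0 scaleNr opprK scalemxAr -mulmxDr H eqxx.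
have c0 : ricci c G = lam *: (1%:M - nikolayevsky c b) ->
    exists D, derivation c D /\ ricci c G = lam%:M + D.
  move=> HR; exists (- lam *: nikolayevsky c b); split.
    set v : 'cV[R]_n := M^T *m b + const_mx 1.
    have -> : - lam *: nikolayevsky c b = diag_mx ((- lam *: v)^T).
      apply/matrixP => i j; rewrite /nikolayevsky !mxE.
      case: (eqVneq i j) => [ij|ij]; rewrite /= ?mulr1n ?mulr0n ?mulr0 //.
    apply/(deriv_M Hn).
    by rewrite -scalemxAr /v mulmxDr mulmxA Hb M1 addrN scaler0.
  by rewrite HR scalerBr scalemx1 scaleNr.
tfae.
- by move/c1/c2.
- move=> HR; apply: c3.
  move: HR; rewrite RicE N2 => /diag_inj E.
  rewrite /cond.
  have -> : M^T *m X = 2 *: (2^-1 *: (M^T *m X)).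
    by rewrite scalerA mulfV ?scale1r // pnatr_eq0.
  by rewrite E scalerA mulrN.
- case=> y [Hy HX]; apply: c0; apply: c2.
  by rewrite /cond HX mulmxDr Hy addr0 -scalemxAr.
Qed.
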